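(* Let $\mathcal{C}$ be a class of groups that contains a root class $\mathcal{R}$. Suppose that (1) every $\mathcal{R}$-by-$\mathcal{C}$ group belongs to $\mathcal{C}$; (2) for every group in $\mathcal{C}$ there is a group in $\mathcal{R}$ of the same cardinality. Then every group $G$ having a normal subgroup $N$ that is residually $\mathcal{R}$ with $G/N\in\mathcal{C}$ is residually $\mathcal{C}$.
   Context: A class of groups is a family of groups closed under isomorphism. A group $G$ is residually $\mathcal{C}$ if for every $g\in G\setminus\{e\}$ there exist $C\in\mathcal{C}$ and a surjective homomorphism $\varphi\colon G\to C$ with $\varphi(g)\neq e$. A root class is a non-trivial class $\mathcal{R}$ closed under subgroups and finite direct products satisfying the Gruenberg condition: for any chain $K\trianglelefteq H\trianglelefteq G$ with $G/H, H/K\in\mathcal{R}$ there is $L\trianglelefteq G$ with $L\subseteq K$ and $G/L\in\mathcal{R}$. A group is $\mathcal{A}$-by-$\mathcal{B}$ if it has a normal subgroup in $\mathcal{A}$ with quotient in $\mathcal{B}$. *)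

(* Defs.v *)
From Stdlib Require Import ProofIrrelevance.

Record group := Group {
  carrier :> Type;
  mul : carrier -> carrier -> carrier;
  one : carrier;
  inv : carrier -> carrier;
  mulA : forall x y z, mul x (mul y z) = mul (mul x y) z;
  mul1g : forall x, mul one x = x;
  mulg1 : forall x, mul x one = x;
  mulVg : forall x, mul (inv x) x = one;
  mulgV : forall x, mul x (inv x) = one
}.

Arguments mul {g} _ _.
Arguments one {g}.
Arguments inv {g} _.

Definition is_hom (G H : group) (f : G -> H) : Prop :=
  forall x y, f (mul x y) = mul (f x) (f y).

Definition surj {A B : Type} (f : A -> B) : Prop := forall y, exists x, f x = y.

Definition isomorphic (G H : group) : Prop :=
  exists (f : G -> H) (g : H -> G),
    is_hom G H f /\ (forall x, g (f x) = x) /\ (forall y, f (g y) = y).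

Definition class_of_groups (P : group -> Prop) : Prop :=
  forall G H, isomorphic G H -> P G -> P H.

Definition is_subgroup (G : group) (H : G -> Prop) : Prop :=
  H one /\ (forall x y, H x -> H y -> H (mul x y)) /\ (forall x, H x -> H (inv x)).

Definition is_normal (G : group) (H : G -> Prop) : Prop :=
  is_subgroup G H /\ (forall g h, H h -> H (mul (inv g) (mul h g))).

Lemma normal_subgroup (G : group) (H : G -> Prop) : is_normal G H -> is_subgroup G H.
Proof. intros [h _]; exact h. Qed.

Section SubGroup.
Variables (G : group) (H : G -> Prop) (HS : is_subgroup G H).

Definition sg_mul (x y : {x : G | H x}) : {x : G | H x} :=
  exist _ (mul (proj1_sig x) (proj1_sig y))
    (proj1 (proj2 HS) _ _ (proj2_sig x) (proj2_sig y)).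
Definition sg_one : {x : G | H x} := exist _ one (proj1 HS).
Definition sg_inv (x : {x : G | H x}) : {x : G | H x} :=
  exist _ (inv (proj1_sig x)) (proj2 (proj2 HS) _ (proj2_sig x)).

Lemma sg_eq (x y : {x : G | H x}) : proj1_sig x = proj1_sig y -> x = y.
Proof.
  destruct x as [x hx], y as [y hy]; simpl; intros ->.
  f_equal; apply proof_irrelevance.
Qed.

Definition sub_group : group.
Proof.
  refine (@Group {x : G | H x} sg_mul sg_one sg_inv _ _ _ _ _);
  intros; apply sg_eq; simpl.
  - apply mulA.
  - apply mul1g.
  - apply mulg1.
  - apply mulVg.
  - apply mulgV.
Defined.
End SubGroup.

Definition prod_group (G H : group) : group.
Proof.
  refine (@Group (G * H)%type
            (fun x y => (mul (fst x) (fst y), mul (snd x) (snd y)))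
            (one, one) (fun x => (inv (fst x), inv (snd x))) _ _ _ _ _);
  intros; simpl; f_equal; auto using mulA, mul1g, mulg1, mulVg, mulgV.
  all: destruct x; simpl; f_equal; auto using mul1g, mulg1, mulVg, mulgV.
Defined.

(* "G/N belongs to P": some group in P is the image of a surjective
   homomorphism of G whose kernel is exactly N (first isomorphism theorem;
   P is closed under isomorphism). *)
Definition quot_in (P : group -> Prop) (G : group) (N : G -> Prop) : Prop :=
  exists (Q : group) (f : G -> Q),
    P Q /\ is_hom G Q f /\ surj f /\ (forall x, f x = one <-> N x).

Definition residually (P : group -> Prop) (G : group) : Prop :=
  forall g : G, g <> one ->
    exists (Q : group) (f : G -> Q), P Q /\ is_hom G Q f /\ surj f /\ f g <> one.

Definition root_class (R : group -> Prop) : Prop :=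
  class_of_groups R
  /\ (exists G : group, R G /\ exists g : G, g <> one)
  /\ (forall (G : group) (H : G -> Prop) (HS : is_subgroup G H),
        R G -> R (sub_group G H HS))
  /\ (forall G H : group, R G -> R H -> R (prod_group G H))
  (* Gruenberg condition *)
  /\ (forall (G : group) (H K : G -> Prop) (HN : is_normal G H),
        (forall x, K x -> H x) ->
        is_normal (sub_group G H (normal_subgroup G H HN))
                  (fun x => K (proj1_sig x)) ->
        quot_in R G H ->
        quot_in R (sub_group G H (normal_subgroup G H HN))
                  (fun x => K (proj1_sig x)) ->
        exists L : G -> Prop,
          is_normal G L /\ (forall x, L x -> K x) /\ quot_in R G L).

Definition by_class (A B : group -> Prop) (G : group) : Prop :=
  exists (N : G -> Prop) (HN : is_normal G N),
    A (sub_group G N (normal_subgroup G N HN)) /\ quot_in B G N.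

Definition equipotent (A B : Type) : Prop :=
  exists (f : A -> B) (g : B -> A), (forall x, g (f x) = x) /\ (forall y, f (g y) = y).

(* Main.v *)
Require Import Defs.
From Stdlib Require Import ProofIrrelevance FunctionalExtensionality Classical ClassicalEpsilon.
Arguments mulA {g} x y z.
Arguments mul1g {g} x.
Arguments mulg1 {g} x.
Arguments mulVg {g} x.
Arguments mulgV {g} x.

Lemma inv_one (G : group) : inv (@one G) = one.
Proof. rewrite <- (mul1g (inv one)); apply mulgV. Qed.

Lemma mul_eq_one_l (G : group) (x y : G) : mul x (inv y) = one -> x = y.
Proof. intro h. rewrite <- (mulg1 x), <- (mulVg y), mulA, h, mul1g. reflexivity. Qed.

Lemma invK (G : group) (x : G) : inv (inv x) = x.
Proof. apply mul_eq_one_l; apply mulVg. Qed.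

Lemma mul_cancel_l (G : group) (a x y : G) : mul a x = mul a y -> x = y.
Proof.
  intro h. rewrite <- (mul1g x), <- (mulVg a), <- mulA, h, mulA, mulVg, mul1g.
  reflexivity.
Qed.

Lemma mul_cancel_r (G : group) (a x y : G) : mul x a = mul y a -> x = y.
Proof.
  intro h. rewrite <- (mulg1 x), <- (mulgV a), mulA, h, <- mulA, mulgV, mulg1.
  reflexivity.
Qed.

Lemma hom_one (G H : group) (f : G -> H) : is_hom G H f -> f one = one.
Proof.
  intro hf. pose proof (hf one one) as e. rewrite mul1g in e.
  apply (mul_cancel_l _ (f one)). rewrite <- e, mulg1. reflexivity.
Qed.

Lemma hom_inv (G H : group) (f : G -> H) : is_hom G H f -> forall x, f (inv x) = inv (f x).
Proof.
  intros hf x. apply mul_eq_one_l. rewrite invK, <- hf, mulVg. apply hom_one; exact hf.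
Qed.

Definition img {X Y : group} (j : X -> Y) : Y -> Prop := fun y => exists x, j x = y.

Lemma img_sub (X Y : group) (j : X -> Y) : is_hom X Y j -> is_subgroup Y (img j).
Proof.
  intro hj. split; [|split].
  - exists one. apply hom_one; exact hj.
  - intros a b [x <-] [y <-]. exists (mul x y). apply hj.
  - intros a [x <-]. exists (inv x). apply hom_inv; exact hj.
Qed.

Lemma kernel_normal (X Y : group) (k : X -> Y) : is_hom X Y k -> is_normal X (fun x => k x = one).
Proof.
  intro hk. split; [split; [|split]|].
  - apply hom_one; exact hk.
  - intros x y h1 h2. rewrite hk, h1, h2, mul1g. reflexivity.
  - intros x h. rewrite hom_inv, h by exact hk. apply inv_one.
  - intros g h e. rewrite !hk, e, mul1g, <- hk, mulVg. apply hom_one; exact hk.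
Qed.

Lemma inj_hom_R (R : group -> Prop) :
  class_of_groups R ->
  (forall (G : group) (H : G -> Prop) (HS : is_subgroup G H), R G -> R (sub_group G H HS)) ->
  forall (X Y : group) (j : X -> Y), is_hom X Y j -> (forall a b, j a = j b -> a = b) ->
  R Y -> R X.
Proof.
  intros cR sR X Y j hj ij RY.
  pose (HS := img_sub X Y j hj).
  apply (cR (sub_group Y (img j) HS)); [| apply sR; exact RY].
  pose (f := fun y : sub_group Y (img j) HS =>
               proj1_sig (constructive_indefinite_description _ (proj2_sig y))).
  assert (spec : forall y, j (f y) = proj1_sig y).
  { intro y. unfold f. destruct (constructive_indefinite_description _ _). simpl. exact e. }
  exists f, (fun x => exist _ (j x) (ex_intro _ x eq_refl)).
  split; [|split].
  - intros a b. apply ij. rewrite hj, !spec. reflexivity.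
  - intro y. apply sg_eq. simpl. apply spec.
  - intro x. apply ij. rewrite spec. reflexivity.
Qed.

Definition pow_group (S : group) (A : Type) : group.
Proof.
  refine (@Group (A -> S) (fun F G x => mul (F x) (G x)) (fun _ => one)
            (fun F x => inv (F x)) _ _ _ _ _);
  intros; apply functional_extensionality; intros;
  auto using mulA, mul1g, mulg1, mulVg, mulgV.
Defined.

Definition wr_mul {S T : group} (u v : (T -> S) * T) : (T -> S) * T :=
  (fun x => mul (fst u x) (fst v (mul x (snd u))), mul (snd u) (snd v)).
Definition wr_inv {S T : group} (u : (T -> S) * T) : (T -> S) * T :=
  (fun y => inv (fst u (mul y (inv (snd u)))), inv (snd u)).

Definition wr (S T : group) : group.
Proof.
  refine (@Group ((T -> S) * T)%type wr_mul (fun _ => one, one) wr_inv _ _ _ _ _).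
  - intros [F a] [G b] [K c]; unfold wr_mul; simpl; f_equal;
      [apply functional_extensionality; intro; rewrite !mulA; reflexivity | apply mulA].
  - intros [F a]; unfold wr_mul; simpl; f_equal;
      [apply functional_extensionality; intro; rewrite mul1g, mulg1; reflexivity | apply mul1g].
  - intros [F a]; unfold wr_mul; simpl; f_equal;
      [apply functional_extensionality; intro; rewrite mulg1; reflexivity | apply mulg1].
  - intros [F a]; unfold wr_mul, wr_inv; simpl; f_equal;
      [apply functional_extensionality; intro; apply mulVg | apply mulVg].
  - intros [F a]; unfold wr_mul, wr_inv; simpl; f_equal;
      [apply functional_extensionality; intro; rewrite <- (mulA x a), mulgV, mulg1; apply mulgV
      | apply mulgV].
Defined.

Lemma wr_R (R : group -> Prop) : root_class R -> forall S T : group, R S -> R T -> R (wr S T).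
Proof.
  intros [cR [_ [sR [_ gR]]]] S T RS RT.
  pose (Hp := fun w : wr S T => snd w = one).
  pose (K := fun w : wr S T => snd w = one /\ fst w one = one).
  assert (HN : is_normal (wr S T) Hp).
  { apply (kernel_normal (wr S T) T (fun w => snd w)). intros x y; reflexivity. }
  assert (HK : is_normal (sub_group (wr S T) Hp (normal_subgroup _ _ HN))
                 (fun x => K (proj1_sig x))).
  { split; [split; [|split]|].
    - split; reflexivity.
    - intros [[F a] ha] [[G b] hb] [_ h1] [_ h2]; unfold Hp in *; simpl in *; subst.
      split; simpl; [apply mul1g|]. rewrite mul1g, h1, h2. apply mul1g.
    - intros [[F a] ha] [_ h1]; unfold Hp in *; simpl in *; subst.
      split; simpl; [apply inv_one|]. rewrite inv_one, mul1g, h1. apply inv_one.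
    - intros [[G b] hb] [[F a] ha] [_ h1]; unfold Hp in *; simpl in *; subst.
      split; simpl.
      + rewrite inv_one, !mul1g. try apply mulVg; try reflexivity.
      + rewrite inv_one, !mul1g. rewrite h1, mul1g. apply mulVg. }
  destruct (gR (wr S T) Hp K HN) as [L [LN [LK [Q0 [f0 [RQ0 [hf0 [_ kf0]]]]]]]].
  - intros x [h _]; exact h.
  - exact HK.
  - exists T, (fun w => snd w). split; [exact RT|split; [intros x y; reflexivity|split]].
    + intro y. exists (fun _ => one, y). reflexivity.
    + intro x. reflexivity.
  - exists S, (fun w => fst (proj1_sig w) one). split; [exact RS|split; [|split]].
    + intros [[F a] ha] [[G b] hb]; unfold Hp in *; simpl in *; subst. simpl.
      rewrite mul1g. reflexivity.
    + intro y. exists (exist Hp (fun _ => y, one) eq_refl). reflexivity.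
    + intros [w hw]; simpl. unfold K. split; [intro; split; assumption | intros [_ h]; exact h].
  - assert (Lone : forall z, L z -> z = one).
    { intros [F a] hz. destruct (LK _ hz) as [ha _]. simpl in ha; subst.
      simpl. f_equal. apply functional_extensionality; intro x.
      pose proof (LK _ (proj2 LN (fun _ => one, inv x) _ hz)) as [_ h].
      simpl in h. rewrite inv_one, mul1g, mulg1, invK, mul1g in h. exact h. }
    apply (inj_hom_R R cR sR _ _ f0 hf0); [|exact RQ0].
    intros a b e. apply mul_eq_one_l. apply Lone. apply kf0.
    rewrite hf0, (hom_inv _ _ _ hf0), e. apply mulgV.
Qed.

Lemma pow_R (R : group -> Prop) : root_class R -> forall S T : group, R S -> R T ->
  R (pow_group S T).
Proof.
  intros rR S T RS RT. pose proof (wr_R R rR S T RS RT) as W.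
  destruct rR as [cR [_ [sR _]]].
  apply (inj_hom_R R cR sR _ (wr S T) (fun F : pow_group S T => ((F : T -> S), (one : T)) : wr S T)); [| |exact W].
  - intros F G. simpl. unfold wr_mul. simpl. f_equal; [|symmetry; apply mul1g].
    apply functional_extensionality; intro x. rewrite mulg1. reflexivity.
  - intros a b e. injection e. auto.
Qed.

Lemma pow_R_equi (R : group -> Prop) : root_class R -> forall (S T : group) (A : Type),
  R S -> R T -> equipotent A (carrier T) -> R (pow_group S A).
Proof.
  intros rR S T A RS RT [e [e' [ee' e'e]]]. pose proof (pow_R R rR S T RS RT) as P.
  destruct rR as [cR [_ [sR _]]].
  apply (inj_hom_R R cR sR _ (pow_group S T) (fun F : pow_group S A => (fun h => (F : A -> S) (e' h)) : pow_group S T)); [| |exact P].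
  - intros F G. reflexivity.
  - intros a b h. apply functional_extensionality; intro q.
    rewrite <- (ee' q). exact (equal_f h (e q)).
Qed.

Lemma mulVK (G : group) (a b : G) : mul (mul a (inv b)) b = a.
Proof. rewrite <- mulA, mulVg, mulg1. reflexivity. Qed.

Theorem lemma3p3 (C R : group -> Prop) :
  class_of_groups C ->
  root_class R ->
  (forall G, R G -> C G) ->
  (forall G, by_class R C G -> C G) ->
  (forall G, C G -> exists H, R H /\ equipotent (carrier G) (carrier H)) ->
  forall (G : group) (N : G -> Prop) (HN : is_normal G N),
    residually R (sub_group G N (normal_subgroup G N HN)) ->
    quot_in C G N ->
    residually C G.
Proof.
  intros cC rR RC byC card G N HN resN [Q [f [CQ [fh [fs fk]]]]] g gne.
  destruct (classic (N g)) as [Ng | nNg].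
  2: { exists Q, f; repeat split; auto. intro e; apply nNg, fk, e. }
  destruct (resN (exist _ g Ng)) as [S [phi [RS [phih [_ phig]]]]].
  { intro e. apply gne. exact (f_equal (@proj1_sig _ _) e). }
  destruct (card Q CQ) as [H [RH eqH]].
  pose proof (pow_R_equi R rR S H (carrier Q) RS RH eqH) as RP.
  pose proof rR as [cR [_ [sR _]]].
  pose (phi2 := fun y : G => match excluded_middle_informative (N y) with
                             | left p => phi (exist _ y p) | right _ => one end).
  assert (phi2E : forall y (p : N y), phi2 y = phi (exist _ y p)).
  { intros y p. unfold phi2. destruct (excluded_middle_informative (N y)) as [p'|n].
    - f_equal. apply sg_eq. reflexivity.
    - contradiction. }
  assert (phi2M : forall a b, N a -> N b -> phi2 (mul a b) = mul (phi2 a) (phi2 b)).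
  { intros a b pa pb. pose proof (proj1 (proj2 (proj1 HN)) a b pa pb) as pab.
    rewrite (phi2E _ pab), (phi2E _ pa), (phi2E _ pb), <- phih. apply (f_equal phi). apply sg_eq. reflexivity. }
  pose (t := fun q : Q => proj1_sig (constructive_indefinite_description _ (fs q))).
  assert (tE : forall q, f (t q) = q).
  { intro q. unfold t. destruct (constructive_indefinite_description _ _). simpl. exact e. }
  pose (psi := fun x : G => ((fun q => phi2 (mul (t q) (mul x (inv (t (mul q (f x))))))), f x)
                 : wr S Q).
  assert (inN : forall q x, N (mul (t q) (mul x (inv (t (mul q (f x))))))).
  { intros q x. apply fk. rewrite !fh, (hom_inv _ _ _ fh), !tE, mulA, mulgV. reflexivity. }
  assert (psih : is_hom G (wr S Q) psi).
  { intros x y. unfold psi. simpl. unfold wr_mul. simpl. f_equal; [|apply fh].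
    apply functional_extensionality; intro q.
    rewrite <- phi2M by apply inN. f_equal.
    rewrite fh, (mulA q (f x) (f y)), !mulA, mulVK. reflexivity. }
  pose (HS := img_sub G (wr S Q) psi psih).
  pose (Q' := sub_group (wr S Q) (img psi) HS).
  pose (k := fun x : G => exist (img psi) (psi x) (ex_intro _ x eq_refl) : Q').
  assert (kh : is_hom G Q' k).
  { intros x y. apply sg_eq. simpl. apply psih. }
  exists Q', k. split; [|split; [exact kh|split]].
  - apply byC.
    pose (sndQ := fun w : Q' => snd (proj1_sig w) : Q).
    assert (sndh : is_hom Q' Q sndQ) by (intros x y; reflexivity).
    pose (HN' := kernel_normal Q' Q sndQ sndh).
    exists (fun w => sndQ w = one), HN'. split.
    + apply (inj_hom_R R cR sR _ (pow_group S Q)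
               (fun w : sub_group Q' (fun w => sndQ w = one) (normal_subgroup _ _ HN') => fst (proj1_sig (proj1_sig w)) : pow_group S Q)); [| |exact RP].
      * intros [[[F a] h1] h2] [[[F' a'] h1'] h2']; unfold sndQ in *; simpl in h2, h2'; subst.
        simpl. unfold wr_mul. simpl. apply functional_extensionality; intro x.
        rewrite mulg1. reflexivity.
      * intros [[[F a] h1] h2] [[[F' a'] h1'] h2']; unfold sndQ in *; simpl in h2, h2'; subst.
        simpl. intro e; subst. rewrite (proof_irrelevance _ h1 h1'). f_equal.
    + exists Q, sndQ. split; [exact CQ|split; [exact sndh|split]].
      * intro q. exists (k (t q)). unfold sndQ. simpl. apply tE.
      * intro x. reflexivity.
  - intros [w [x hx]]. exists x. apply sg_eq. exact hx.
  - intro e. pose proof (f_equal (@proj1_sig _ _) e) as e1. simpl in e1.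
    pose proof (f_equal (fun p => fst p one) e1) as e2. simpl in e2.
    assert (fg : f g = one) by (apply fk; exact Ng).
    rewrite fg, mulg1 in e2.
    assert (N1 : N (t one)) by (apply fk; apply tE).
    assert (NV : N (inv (t one))) by (apply (proj2 (proj2 (proj1 HN))); exact N1).
    assert (NgV : N (mul g (inv (t one)))) by (apply (proj1 (proj2 (proj1 HN))); assumption).
    rewrite (phi2M _ _ N1 NgV), (phi2M _ _ Ng NV) in e2.
    assert (e3 : mul (phi2 (t one)) (phi2 (inv (t one))) = one).
    { rewrite <- phi2M by assumption. rewrite mulgV.
      rewrite (phi2E _ (proj1 (proj1 HN))). rewrite <- (hom_one _ _ _ phih). apply (f_equal phi). apply sg_eq. reflexivity. }
    apply phig. rewrite <- (phi2E _ Ng).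
    rewrite <- e3 in e2. apply mul_cancel_l in e2.
    apply (mul_cancel_r _ (phi2 (inv (t one)))). rewrite mul1g. exact e2.
Qed.
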